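(* For every integer $d>2$, the number of $(d,d)$-necklaces (circular arrangements of $d$ white and $d$ black beads, modulo cyclic rotation, with no primitivity requirement) is even. *)

(* Defs.v *)
From mathcomp Require Import all_boot.
Set Implicit Arguments. Unset Strict Implicit. Unset Printing Implicit Defensive.

(* A bead arrangement of length n: a binary word (true = black, false = white). *)
Definition dd_words (d : nat) : {set (d + d).-tuple bool} :=
  [set w : (d + d).-tuple bool | count id w == d].

Definition rot_equiv (n : nat) : rel (n.-tuple bool) :=
  fun u v => [exists k : 'I_n.+1, val v == rot k (val u)].

Definition dd_necklaces (d : nat) : {set {set (d + d).-tuple bool}} :=
  equivalence_partition (@rot_equiv (d + d)) (dd_words d).

(* Main.v *)
Require Import Defs.
From mathcomp Require Import all_boot all_fingroup.
From mathcomp Require Import pgroup sylow cyclic zify.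
Set Implicit Arguments. Unset Strict Implicit. Unset Printing Implicit Defensive.
Local Open Scope group_scope.

Lemma nth_rot_mod (s : seq bool) k i : k <= size s -> i < size s ->
  nth false (rot k s) i = nth false s ((i + k) %% size s).
Proof.
move=> hk hi; rewrite /rot nth_cat size_drop.
case: ltnP => h.
  rewrite nth_drop modn_small; first by rewrite addnC.
  lia.
rewrite nth_take; last by lia.
have -> : (i + k) %% size s = i + k - size s.
  rewrite -{1}(subnK (_ : size s <= i + k)); last by lia.
  rewrite modnDr modn_small //; lia.
congr nth; lia.
Qed.

Definition rot1t n (x : n.-tuple bool) : n.-tuple bool := [tuple of rot 1 x].
Lemma rot1t_inj n : injective (@rot1t n).
Proof. by move=> x y /(congr1 val) /rot_inj /val_inj. Qed.
Definition rperm n : {perm n.-tuple bool} := perm (@rot1t_inj n).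

Definition cmplt n (x : n.-tuple bool) : n.-tuple bool := [tuple of map negb x].
Lemma cmplt_inj n : injective (@cmplt n).
Proof. by move=> x y /(congr1 val) /= /(inj_map negb_inj) /val_inj. Qed.
Definition cperm n : {perm n.-tuple bool} := perm (@cmplt_inj n).

Lemma nth_rpermX n k (x : n.-tuple bool) i : i < n ->
  nth false ((rperm n ^+ k) x) i = nth false x ((i + k) %% n).
Proof.
elim: k i => [|k IH] i hi; first by rewrite expg0 perm1 addn0 modn_small.
rewrite expgSr permM permE /rot1t /= nth_rot_mod ?size_tuple //; last first.
  by case: n hi {IH} x => // n.
rewrite IH ?ltn_pmod //; last by case: n hi {IH x}.
by rewrite modnDml; congr (nth _ _ (_ %% _)); lia.
Qed.

Lemma nth_cperm n (x : n.-tuple bool) i : i < n ->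
  nth false (cperm n x) i = ~~ nth false x i.
Proof. by move=> hi; rewrite permE /= (nth_map false) ?size_tuple. Qed.

Lemma tuple_nthP n (x y : n.-tuple bool) :
  (forall i, i < n -> nth false x i = nth false y i) -> x = y.
Proof.
move=> h; apply: val_inj; apply: (@eq_from_nth _ false); first by rewrite !size_tuple.
by move=> i; rewrite size_tuple; apply: h.
Qed.

Lemma rpermX_rot n k (x : n.-tuple bool) : k <= n -> val ((rperm n ^+ k) x) = rot k x.
Proof.
move=> hk; apply: (@eq_from_nth _ false); first by rewrite size_rot !size_tuple.
move=> i; rewrite size_tuple => hi.
by rewrite nth_rpermX // nth_rot_mod ?size_tuple.
Qed.

Lemma rpermn n : rperm n ^+ n = 1.
Proof.
apply/permP => x; rewrite perm1; apply: tuple_nthP => i hi.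
by rewrite nth_rpermX // modnDr modn_small.
Qed.

Lemma commute_rc n : commute (rperm n) (cperm n).
Proof.
apply/permP => x; rewrite !permM; apply: tuple_nthP => i hi.
rewrite nth_cperm // -(expg1 (rperm n)) !nth_rpermX // ?nth_cperm //.
by case: n hi {x} => // n; rewrite ltn_pmod.
Qed.

Lemma count_rot_id k (s : seq bool) : count id (rot k s) = count id s.
Proof. by move: (perm_rot k s); move/(_ s); rewrite perm_refl => /seq.permP ->. Qed.

Lemma rpermX_mod n k : rperm n ^+ k = rperm n ^+ (k %% n).
Proof. by rewrite expg_mod // rpermn. Qed.

Lemma count_rpermX n k (x : n.-tuple bool) : count id ((rperm n ^+ k) x) = count id x.
Proof.
case: n x => [|n] x; first by rewrite (tuple0 ((rperm 0 ^+ k) x)) (tuple0 x).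
by rewrite rpermX_mod rpermX_rot ?count_rot_id // ltnW // ltn_pmod.
Qed.

Lemma orbit_rot n (x y : n.-tuple bool) :
  (y \in orbit 'P <[rperm n]> x) = rot_equiv x y.
Proof.
apply/orbitP/existsP => [[g /cycleP [k ->{g}]] /= <-{y}|[k /eqP hk]].
  case: n x => [|n] x.
    by exists ord0; rewrite (tuple0 ((rperm 0 ^+ k) x)) (tuple0 x).
  have hk : k %% n.+1 < n.+2 by rewrite ltnS ltnW // ltn_pmod.
  by exists (Ordinal hk); rewrite /= rpermX_mod rpermX_rot // ltnW // ltn_pmod.
exists (rperm n ^+ k); first exact: mem_cycle.
by apply: val_inj; rewrite /= rpermX_rot // -ltnS.
Qed.

Definition Gr n := <[rperm n]>.

Lemma acts_Gr d : [acts Gr (d + d), on dd_words d | 'P].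
Proof.
apply/actsP => g /cycleP [k ->] x /=.
by rewrite !inE count_rpermX.
Qed.

Lemma necklaces_orbits d :
  dd_necklaces d = orbit 'P (Gr (d + d)) @: dd_words d.
Proof.
apply: eq_in_imset => x hx; apply/setP => y.
rewrite inE -orbit_rot andb_idl // => hy.
move/orbitP: hy => [g hg <-]; by rewrite (actsP (acts_Gr d)).
Qed.

Lemma odd_sum_odd (I : finType) (A : {set I}) (f : I -> nat) :
  (forall i, i \in A -> odd (f i)) -> odd (\sum_(i in A) f i) = odd #|A|.
Proof.
move=> hf; rewrite -sum1_card.
elim/big_rec2: _ => // i a b hi IH; by rewrite !oddD hf // IH.
Qed.

Lemma orbit_setact_comm (T : finType) (P : {group {perm T}}) (g : {perm T}) x :
  g \in 'C(P) -> ('P^* (orbit 'P P x) g)%act = orbit 'P P ('P%act x g).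
Proof.
move=> hg; apply/setP => z; apply/imsetP/orbitP.
  move=> [y /orbitP [p hp <-] ->]; exists p => //=.
  by rewrite /aperm -!permM (centP hg p hp).
move=> [p hp <-]; exists ('P%act x p); first exact: mem_orbit.
by rewrite /= /aperm -!permM (centP hg p hp).
Qed.

Lemma acts_orbits (T : finType) (H P : {group {perm T}}) (S : {set T}) :
  H \subset 'C(P) -> [acts H, on S | 'P] -> [acts H, on orbit 'P P @: S | 'P^*].
Proof.
move=> hHC hS.
have key : forall g B, g \in H -> B \in orbit 'P P @: S -> ('P^* B g)%act \in orbit 'P P @: S.
  move=> g B hg /imsetP [x hx ->].
  rewrite orbit_setact_comm; last exact: (subsetP hHC).
  by apply: imset_f; rewrite (actsP hS).
apply/actsP => g hg B; apply/idP/idP; last exact: key.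
move=> h; rewrite -(actK 'P^* g B); apply: key => //; by rewrite groupV.
Qed.

Lemma card_imset_same (A B1 B2 : finType) (S : {set A}) (f : A -> B1) (g : A -> B2) :
  {in S &, forall x y, (f x == f y) = (g x == g y)} -> #|f @: S| = #|g @: S|.
Proof.
move=> hfg; have [S0|[x0 hx0]] := set_0Vmem S; first by rewrite S0 !imset0 !cards0.
pose h z := f (odflt x0 [pick x in S | g x == z]).
have hh : {in S, forall x, h (g x) = f x}.
  move=> x hx; rewrite /h; case: pickP => [y /andP [hy /eqP e] | none] /=.
    by apply/eqP; rewrite hfg // e.
  by have := none x; rewrite hx eqxx.
have -> : f @: S = h @: (g @: S).
  by rewrite -imset_comp; apply: eq_in_imset => x hx; rewrite /= hh.
apply: card_in_imset => _ _ /imsetP [x hx ->] /imsetP [y hy ->].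
by rewrite !hh // => /eqP; rewrite hfg // => /eqP.
Qed.

Lemma odd_index_orbits (T : finType) (G P : {group {perm T}}) (S : {set T}) :
  P \subset G -> abelian G -> odd #|G : P| -> [acts G, on S | 'P] ->
  odd #|orbit 'P G @: S| = odd #|orbit 'P P @: S|.
Proof.
move=> sPG abG oddI hS.
have hGC : G \subset 'C(P) := subset_trans abG (centS sPG).
have actsOm := acts_orbits hGC hS.
have partOm := orbit_partition actsOm.
have -> : odd #|orbit 'P P @: S| = odd #|orbit 'P^* G @: (orbit 'P P @: S)|.
  rewrite (card_partition partOm) odd_sum_odd // => O /imsetP [B hB ->].
  rewrite card_orbit.
  have hP : P \subset 'C_G[B | 'P^*].
    rewrite subsetI sPG /=; apply/subsetP => p hp; apply/astab1P.
    case/imsetP: hB => x hx ->.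
    rewrite orbit_setact_comm; last exact: (subsetP hGC _ (subsetP sPG _ hp)).
    exact: orbit_act.
  exact: dvdn_odd (indexgS G hP) oddI.
rewrite -imset_comp; congr odd; apply: esym; apply: card_imset_same => x y hx hy /=.
apply/eqP/eqP => [hf | hg].
  have : orbit 'P P y \in orbit 'P^* G (orbit 'P P x) by rewrite hf orbit_refl.
  case/orbitP => h hh e.
  rewrite orbit_setact_comm in e; last exact: (subsetP hGC).
  have : y \in orbit 'P P ('P%act x h) by rewrite e orbit_refl.
  case/orbitP => p hp <-.
  apply/esym/orbit_eqP; apply/orbitP; exists (h * p).
    by rewrite groupM // (subsetP sPG).
  by rewrite actM.
have : y \in orbit 'P G x by rewrite hg orbit_refl.
case/orbitP => h hh <-.
rewrite -orbit_setact_comm; last exact: (subsetP hGC).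
by rewrite orbit_act.
Qed.

Lemma fix_mod2 (T : finType) (P : {group {perm T}}) (c : {perm T}) (S : {set T}) :
  c ^+ 2 = 1 -> c \in 'C(P) -> [acts <[c]>, on S | 'P] ->
  odd #|orbit 'P P @: S| = odd #|[set B in orbit 'P P @: S | ('P^* B c)%act == B]|.
Proof.
move=> c2 hc hS.
have hcC : <[c]> \subset 'C(P) by rewrite cycle_subG.
have hacts := acts_orbits hcC hS.
have p2 : 2.-group <[c]>.
  rewrite /pgroup -orderE; apply: (pnat_dvd _ (pnat_id (isT : prime 2))).
  by rewrite order_dvdn c2.
have := pgroup_fix_mod p2 hacts.
move=> e; have e2 : (odd #|orbit 'P P @: S| : nat) = odd #|'Fix_(orbit 'P P @: S | 'P^*)(<[c]>)|.
  by rewrite -!modn2.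
have -> : odd #|orbit 'P P @: S| = odd #|'Fix_(orbit 'P P @: S | 'P^*)(<[c]>)|.
  by move: e2; do 2 case: odd.
congr odd; apply: eq_card => B; rewrite afix_cycle !inE.
by rewrite sub1set inE.
Qed.

Lemma porbit_expmod (T : finType) (g : {perm T}) x k :
  (g ^+ k) x = (g ^+ (k %% #|porbit g x|)) x.
Proof.
set L := #|porbit g x|.
have hq : forall q, iter (q * L) g x = x.
  by elim=> [|q IH] //; rewrite mulSn iterD IH; exact: iter_porbit.
by rewrite !permX {1}(divn_eq k L) addnC iterD hq.
Qed.

Lemma porbit_dvd (T : finType) (g : {perm T}) x k :
  ((g ^+ k) x == x) = (#|porbit g x| %| k).
Proof.
set L := #|porbit g x|.
have L0 : 0 < L by rewrite lt0n card_porbit_neq0.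
rewrite porbit_expmod -/L /dvdn; apply/eqP/eqP => [h|->]; last by rewrite expg0 perm1.
have u := uniq_traject_porbit g x.
have hlt : k %% L < size (traject g x L) by rewrite size_traject ltn_pmod.
have h0 : 0 < size (traject g x L) by rewrite size_traject.
have := nth_uniq x hlt h0 u.
by rewrite !nth_traject ?ltn_pmod //= -permX h eqxx => /esym/eqP.
Qed.

Lemma antiper_arith n h i : 0 < h -> h.*2 %| n ->
  ((i + h) %% n) %% h = i %% h /\ odd (((i + h) %% n) %/ h) = ~~ odd (i %/ h).
Proof.
move=> h0 /dvdnP [k hn].
have hdn : h %| n by rewrite hn -muln2 mulnA dvdn_mulr // dvdn_mull.
split; first by rewrite (modn_dvdm _ hdn) modnDr.
have e1 : (i + h) %/ h = i %/ h + 1 by rewrite divnDr // divnn h0.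
have := divn_eq (i + h) n; set q := (i + h) %/ n; set r := (i + h) %% n => e; rewrite -/r.
have e2 : (i + h) %/ h = q * (n %/ h) + r %/ h.
  rewrite e divnDl; last by rewrite dvdn_mull.
  by rewrite muln_divA.
have e3 : n %/ h = (k * 2)%N by rewrite hn -muln2 mulnA mulnAC mulnK.
move: e2; rewrite e1 e3 => e2.
have := congr1 odd e2; rewrite !oddD !oddM /= !andbF addFb addbT => ->.
by [].
Qed.

Definition antiper n h : {set n.-tuple bool} :=
  [set x : n.-tuple bool | [forall i : 'I_n, nth false x ((i + h) %% n) == ~~ nth false x i]].

Definition mkap n h (v : h.-tuple bool) : n.-tuple bool :=
  @Tuple n _ (mkseq (fun i => nth false v (i %% h) (+) odd (i %/ h)) n)
    (introT eqP (size_mkseq _ _)).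

Lemma nth_mkap n h (v : h.-tuple bool) i : i < n ->
  nth false (mkap n v) i = nth false v (i %% h) (+) odd (i %/ h).
Proof. by move=> hi; rewrite /mkap /= nth_mkseq. Qed.

Lemma card_antiper n h : 0 < n -> 0 < h -> h.*2 %| n -> #|antiper n h| = (2 ^ h)%N.
Proof.
move=> n0 h0 hd.
have hhn : h <= n.
  case/dvdnP: hd n0 => k ->; case: k => [|k] //.
  by rewrite mulSn -addnn -addnA leq_addr.
have -> : antiper n h = @mkap n h @: [set: h.-tuple bool].
  apply/setP => x; apply/idP/imsetP => [hx | [v _ ->]].
    pose pre := @Tuple h _ (mkseq (nth false x) h) (introT eqP (size_mkseq _ _)).
    exists pre => //; apply: tuple_nthP => i hi; rewrite nth_mkap //.
    rewrite /pre /= nth_mkseq ?ltn_pmod //.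
    move: hx; rewrite inE => /forallP hx.
    elim/ltn_ind: i hi => i IH hi.
    case: (ltnP i h) => hih; first by rewrite modn_small // divn_small // addbF.
    have hj : i - h < n by lia.
    have := hx (Ordinal hj); rewrite /= subnK // modn_small // => /eqP ->.
    rewrite IH //; last by lia.
    have e1 : i = (i - h) + h by lia.
    rewrite {3 4}e1 modnDr divnDr // divnn h0 oddD /=.
    by case: (nth _ _ _); case: odd.
  rewrite inE; apply/forallP => i; rewrite !nth_mkap ?ltn_pmod //.
  have [-> ->] := antiper_arith i h0 hd.
  by case: (nth _ _ _); case: odd.
rewrite card_in_imset ?cardsT ?card_tuple ?card_bool //.
move=> v w _ _ e; apply: tuple_nthP => i hi.
have := congr1 (fun x : n.-tuple bool => nth false x i) e.
by rewrite /= !nth_mkap ?(leq_trans hi) // modn_small // divn_small // !addbF.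
Qed.

Lemma count_antiper n h (x : n.-tuple bool) : h <= n -> x \in antiper n h ->
  (count id x).*2 = n.
Proof.
move=> hhn; rewrite inE => /forallP hx.
have e : rot h x = map negb x.
  apply: (@eq_from_nth _ false); first by rewrite size_rot size_map.
  move=> i; rewrite size_rot size_tuple => hi.
  rewrite nth_rot_mod ?size_tuple // (nth_map false) ?size_tuple //.
  exact: (eqP (hx (Ordinal hi))).
have := count_predC id x; rewrite size_tuple.
have -> : count (predC id) x = count id x.
  by rewrite -(count_rot_id h) e count_map; apply: eq_count.
by rewrite addnn.
Qed.

Lemma nth_gX n m j (x : n.-tuple bool) i : i < n ->
  nth false ((rperm n ^+ m ^+ j) x) i = nth false x ((i + m * j) %% n).
Proof. by move=> hi; rewrite -expgM nth_rpermX. Qed.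

Lemma cperm_neq n (x : n.-tuple bool) : 0 < n -> cperm n x != x.
Proof.
move=> n0; apply/eqP => /(congr1 (fun y : n.-tuple bool => nth false y 0)).
by rewrite nth_cperm //; case: (nth _ _ _).
Qed.

Lemma commute_cg n m j : commute (cperm n) (rperm n ^+ m ^+ j).
Proof. by rewrite -expgM; apply: commuteX; apply: commute_sym; exact: commute_rc. Qed.

Lemma cpermK n (x : n.-tuple bool) : cperm n (cperm n x) = x.
Proof.
apply: tuple_nthP => i hi; by rewrite !nth_cperm // negbK.
Qed.

Lemma antiperE n m k (x : n.-tuple bool) :
  (x \in antiper n (m * k)) = (cperm n x == (rperm n ^+ m ^+ k) x).
Proof.
rewrite inE; apply/forallP/eqP => [h | e i].
  apply: tuple_nthP => i hi; rewrite nth_cperm // nth_gX //.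
  by rewrite (eqP (h (Ordinal hi))).
by rewrite -nth_gX // -e nth_cperm.
Qed.

Lemma permXX (T : finType) (g : {perm T}) j x : (g ^+ (j + j)) x = (g ^+ j) ((g ^+ j) x).
Proof. by rewrite expgD permM. Qed.

Lemma antiper_orbit_size n m s (x : n.-tuple bool) : 0 < n -> 0 < s ->
  x \in antiper n (m * 2 ^ s.-1) -> #|porbit (rperm n ^+ m) x| = (2 ^ s)%N.
Proof.
move=> n0 s0; rewrite antiperE => /eqP e.
set g := rperm n ^+ m.
have h2 : (g ^+ (2 ^ s)) x = x.
  rewrite -(prednK s0) expnS mul2n -addnn permXX -/g -e.
  by rewrite /g -permM (commute_cg n m) permM -e cpermK.
move: h2 => /eqP; rewrite porbit_dvd => /(dvdn_pfactor _ _ (isT : prime 2)) [t ht et].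
rewrite et; congr (2 ^ _)%N; apply/eqP; rewrite eqn_leq ht /=.
rewrite leqNgt; apply/negP => hts.
have : #|porbit g x| %| 2 ^ s.-1 by rewrite et dvdn_exp2l // -ltnS prednK.
rewrite -porbit_dvd -e; apply/negP; exact: cperm_neq.
Qed.

Local Close Scope group_scope.

Lemma odd_sum_b (K : nat) (f : nat -> nat) :
  odd (\sum_(s < K) f s) = odd (\sum_(s < K) (odd (f s) : nat)).
Proof. by elim/big_rec2: _ => // i x y _ IH; rewrite !oddD IH oddb. Qed.

Lemma odd_f m s (fs : nat) : odd m -> 0 < s ->
  fs * 2 ^ s = 2 ^ (m * 2 ^ s.-1) -> odd fs = (m == 1) && ((s == 1) || (s == 2)).
Proof.
move=> om s0 e.
have m0 : 0 < m by move: om; case: (m) => [|].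
have hs1 : s.-1 < 2 ^ s.-1 by apply: ltn_expl.
set E := m * 2 ^ s.-1 in e.
have sE : s <= E.
  rewrite /E; apply: leq_trans (leq_pmull _ m0); lia.
have : fs * 2 ^ s = 2 ^ (E - s) * 2 ^ s by rewrite e -expnD subnK.
move/eqP; rewrite eqn_pmul2r ?expn_gt0 // => /eqP ->.
rewrite oddX /= orbF subn_eq0.
case: (ltngtP m 1) => [|hm|em].
- lia.
- have m2 : m != 2 by apply: contraTneq om => ->.
  have m3 : 3 <= m by lia.
  rewrite andFb; apply/negbTE; rewrite -ltnNge /E.
  have : 3 * 2 ^ s.-1 <= m * 2 ^ s.-1 by rewrite leq_mul2r m3 orbT.
  lia.
- rewrite /E em mul1n /=.
  case: s s0 {e sE hs1 E} => [|[|[|k]]] //= _.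
  have hk : k < 2 ^ k by apply: ltn_expl.
  rewrite !expnS; lia.
Qed.

Lemma parity_final a m (f : nat -> nat) : odd m -> (m = 1 -> 1 <= a) -> f 0 = 0 ->
  (forall s, 0 < s <= a.+1 -> f s * 2 ^ s = 2 ^ (m * 2 ^ s.-1)) ->
  ~~ odd (\sum_(s < a.+2) f s).
Proof.
move=> om ha f0 hf; rewrite odd_sum_b.
rewrite (eq_bigr (fun s : 'I_a.+2 => (((m == 1) && ((val s == 1) || (val s == 2))) : nat))); last first.
  move=> [[|s] hs] _ /=; first by rewrite f0 andbF.
  by rewrite (odd_f om _ (hf s.+1 _)) //= ltnS -ltnS.
case: eqP => [em|_]; last by rewrite big1.
have := ha em; case: a {ha hf} => [|a] // _.
rewrite -(big_mkord xpredT (fun s => ((true && ((s == 1) || (s == 2))) : nat))).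
rewrite big_ltn // big_ltn // big_ltn // /=.
rewrite big_nat_cond big1 // => i /andP [/andP [h3 _] _].
by case: i h3 => [|[|[|i]]].
Qed.

Lemma mod_half s j : 0 < s -> 2 ^ s %| j + j -> ~~ (2 ^ s %| j) -> j %% 2 ^ s = 2 ^ s.-1.
Proof.
case: s => [|s] // _; rewrite expnSr addnn -muln2 dvdn_pmul2r // => /dvdnP [t ->] ht.
have ot : odd t.
  apply: contraNT ht => et; rewrite -(odd_double_half t) (negbTE et) add0n -muln2.
  by rewrite mulnAC dvdn_pmul2r ?expn_gt0 // dvdn_mull.
by rewrite /= [2 ^ s * 2]mulnC -muln_modl modn2 ot mul1n.
Qed.

Lemma card_split (T : finType) (F : {set T}) (w : T -> nat) K :
  (forall B, B \in F -> w B < K) ->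
  #|F| = \sum_(s < K) #|[set B in F | w B == s]|.
Proof.
case: K => [|K] hw.
  by rewrite big_ord0; apply: eq_card0 => B; apply/negbTE/negP => /hw.
rewrite -sum1_card.
rewrite (partition_big (fun B => inord (w B) : 'I_K.+1) xpredT) //=.
apply: eq_bigr => s _; rewrite -sum1_card; apply: eq_bigl => B.
rewrite inE; case hB: (B \in F) => //=.
by apply/eqP/eqP => [<-|e]; [rewrite inordK // hw | apply: val_inj; rewrite /= inordK ?hw].
Qed.

Local Open Scope group_scope.

Lemma fixed_even d a m : d = (2 ^ a * m)%N -> odd m -> 2 < d ->
  ~~ odd #|[set B in orbit 'P <[rperm (d + d) ^+ m]> @: dd_words d
            | ('P^* B (cperm (d + d)))%act == B]|.
Proof.
move=> hd om d2.
set n := d + d.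
have n0 : 0 < n by rewrite /n; lia.
have hn : n = (m * 2 ^ a.+1)%N by rewrite /n hd expnS; lia.
set g := rperm n ^+ m; set P := <[g]>; set c := cperm n; set X := dd_words d.
set F := [set B in _ | _].
have g1 : forall x, (g ^+ (2 ^ a.+1)) x = x.
  by move=> x; rewrite /g -expgM -hn rpermn perm1.
have hC : c \in 'C(P).
  rewrite cent_cycle; apply/cent1P; have := commute_cg n m 1; by rewrite expg1.
have hW : forall s, 0 < s <= a.+1 -> antiper n (m * 2 ^ s.-1) \subset X.
  move=> s /andP [s0 sa]; apply/subsetP => x hx.
  have hle : (m * 2 ^ s.-1 <= n)%N.
    have : (2 ^ s.-1 <= 2 ^ a)%N by rewrite leq_exp2l //; lia.
    move=> h; have : (m * 2 ^ s.-1 <= m * 2 ^ a)%N by rewrite leq_mul2l h orbT.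
    rewrite /n hd; lia.
  have := count_antiper hle hx; rewrite /n -addnn => hc.
  by rewrite inE; apply/eqP; lia.
have hactsW : forall s, [acts P, on antiper n (m * 2 ^ s) | 'P].
  move=> s; apply/actsP => h /cycleP [k ->] x; rewrite /= !antiperE.
  rewrite /aperm /g -!permM -(commute_cg n m k).
  rewrite (commuteX2 k (2 ^ s) (commute_refl (rperm n ^+ m))).
  by rewrite !permM (inj_eq perm_inj).
have key1 : forall B, B \in F -> exists s,
    [/\ 0 < s <= a.+1, #|B| = (2 ^ s)%N & B \in orbit 'P P @: antiper n (m * 2 ^ s.-1)].
  move=> B; rewrite inE => /andP [/imsetP [x hx ->] hfix].
  have hLe : #|orbit 'P P x| = #|porbit g x| by rewrite porbitE.
  have : #|porbit g x| %| 2 ^ a.+1 by rewrite -porbit_dvd g1.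
  case/(dvdn_pfactor _ _ (isT : prime 2)) => s hs eL.
  have hcx : c x \in orbit 'P P x.
    rewrite -(eqP hfix) /=; apply: imset_f; exact: orbit_refl.
  rewrite -porbitE in hcx; case/porbitP: hcx => j ej.
  have hcj : ~~ (#|porbit g x| %| j) by rewrite -porbit_dvd -ej; exact: cperm_neq.
  have h2j : #|porbit g x| %| j + j.
    rewrite -porbit_dvd permXX -ej /g /c -permM (commute_cg n m j) permM.
    by rewrite -/c -/g -ej cpermK.
  have s0 : 0 < s by case: s eL {hs} => // eL; rewrite eL dvd1n in hcj.
  exists s; split; first by rewrite s0.
    by rewrite hLe eL.
  apply/imsetP; exists x => //; rewrite antiperE; apply/eqP.
  by rewrite ej (porbit_expmod g x j) eL mod_half // -eL.
have key2 : forall s, 0 < s <= a.+1 ->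
    [set B in F | logn 2 #|B| == s] = orbit 'P P @: antiper n (m * 2 ^ s.-1).
  move=> s hs; apply/setP => B; rewrite inE; apply/andP/idP.
    move=> [hB /eqP hl]; have [s' [hs' e' hB']] := key1 B hB.
    by move: hl; rewrite e' pfactorK // => <-.
  case/imsetP => x hx ->; split.
    rewrite inE; apply/andP; split; first by apply: imset_f; exact: (subsetP (hW s hs)).
    rewrite orbit_setact_comm //= /aperm.
    move: hx; rewrite antiperE => /eqP ->.
    by rewrite -[X in orbit _ _ X]/('P%act x _) orbit_act ?mem_cycle.
  rewrite -porbitE (antiper_orbit_size n0 _ hx) ?pfactorK //.
  by case/andP: hs.
rewrite (@card_split _ F (fun B => logn 2 #|B|) a.+2); last first.
  move=> B hB; have [s [hs e _]] := key1 B hB.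
  by rewrite e pfactorK // ltnS; case/andP: hs.
apply: (@parity_final a m (fun s => #|[set B in F | logn 2 #|B| == s]|) om).
- move=> m1; move: hd d2; rewrite m1 muln1; case: a {key1 key2 hW g1 hn} => [|a'] // -> //.
- cbv beta; apply: eq_card0 => B; rewrite inE; apply/negbTE/andP => [[hB /eqP hl]].
  have [s [hs e _]] := key1 B hB.
  by move: hl hs; rewrite e pfactorK // => ->.
move=> s hs; cbv beta; rewrite key2 //.
have hpart := orbit_partition (hactsW s.-1).
have := card_uniform_partition (n := (2 ^ s)%N) _ hpart.
rewrite card_antiper //.
- move=> -> //; move=> B /imsetP [x hx ->].
  by rewrite -porbitE (antiper_orbit_size n0 _ hx) //; case/andP: hs.
- by rewrite muln_gt0 expn_gt0; case: (m) om.
rewrite hn -muln2 -mulnA -expnSr prednK; last by case/andP: hs.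
by rewrite dvdn_pmul2l ?dvdn_exp2l //; [case/andP: hs | case: (m) om].
Qed.

Lemma decomp2 d : 0 < d -> exists a m, d = (2 ^ a * m)%N /\ odd m.
Proof.
elim/ltn_ind: d => d IH d0.
case od: (odd d); first by exists 0%N, d; rewrite mul1n.
have e : d = (d./2).*2 by rewrite -{1}(odd_double_half d) od.
have e' : d = d./2 + d./2 by rewrite addnn -e.
have h1 : d./2 < d by lia.
have h2 : 0 < d./2 by lia.
have [a [m [e2 om]]] := IH d./2 h1 h2.
by exists a.+1, m; rewrite e e2 expnS -mul2n mulnA.
Qed.

Lemma count_cperm n (x : n.-tuple bool) : count id (cperm n x) = n - count id x.
Proof.
rewrite permE /= count_map; have := count_predC id x; rewrite size_tuple => e.
have h : count (preim negb id) x = count (predC id) x by apply: eq_count.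
rewrite h; lia.
Qed.

Theorem lemma2p4 (d : nat) (hd : 2 < d) : ~~ odd #|dd_necklaces d|.
Proof.
have [a [m [e om]]] := decomp2 (ltnW (ltnW hd)).
rewrite necklaces_orbits.
set n := d + d.
have c2 : cperm n ^+ 2 = 1 by apply/permP => x; rewrite expgS expg1 permM cpermK perm1.
rewrite (@odd_index_orbits _ (Gr n) <[rperm n ^+ m]>) ?acts_Gr ?cycle_abelian //.
- rewrite (@fix_mod2 _ _ (cperm n)) //; first exact: (fixed_even e om hd).
  + by apply/centP => y /cycleP [k ->]; apply: commute_cg.
  + apply/actsP => h /cycleP [k ->] x; rewrite /= !inE.
    rewrite -(expg_mod _ c2) modn2; case: (odd k).
    * rewrite expg1 count_cperm /n; apply/eqP/eqP; lia.
    * by rewrite expg0 act1.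
- by rewrite cycle_subG mem_cycle.
rewrite -divgS ?cycle_subG ?mem_cycle // -!orderE orderXgcd.
set o := #[rperm n]; set gg := gcdn o m.
have o0 : 0 < o := order_gt0 _.
have g0 : 0 < gg by rewrite gcdn_gt0 o0.
have hq : 0 < o %/ gg by rewrite divn_gt0 // dvdn_leq // dvdn_gcdl.
have eo : o = (o %/ gg * gg)%N by rewrite divnK // dvdn_gcdl.
rewrite {1}eo mulKn //.
exact: dvdn_odd (dvdn_gcdr o m) om.
Qed.
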